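(* Let $N\ge 1$, let $K^{(1)},\ldots,K^{(N)}$ be positive integers, let $L=\sum_{i=1}^N K^{(i)}$, and let $M\ge 1$. For each $i$, let $P^{(i)}\in\{0,1\}^{K^{(i)}\times M}$ be a row-partial permutation matrix, let $P\in\mathbb{R}^{L\times M}$ be the vertical stacking of $P^{(1)},\ldots,P^{(N)}$, and set $Q:=PP^{\top}\in\mathbb{R}^{L\times L}$ (uncorrupted data; the cost matrix is $C=-Q$). Consider the following three optimization problems over symmetric $X\in\mathbb{R}^{L\times L}$ (blocks $X^{(i,j)}\in\mathbb{R}^{K^{(i)}\times K^{(j)}}$ indexed conformally with $P$): (i) (strong SDP) maximize $\mathrm{Tr}[QX]$ subject to $X^{(i,i)}=\mathbf{I}_{K^{(i)}}$ for $i=1,\ldots,N$ and $X\succeq 0$; (ii) (weak SDP) maximize $\mathrm{Tr}[QX]$ subject to $\mathrm{diag}(X)=\mathbf{1}_L$, $\mathrm{Tr}\big[X^{(i,i)}\tfrac{\mathbf{1}_{K^{(i)}}\mathbf{1}_{K^{(i)}}^{\top}}{K^{(i)}}\big]=1$ for $i=1,\ldots,N$, and $X\succeq 0$; (iii) (GW-type SDP) maximize $\mathrm{Tr}[QX]$ subject to $\mathrm{diag}(X)=\mathbf{1}_L$ and $X\succeq 0$. Then $X^{\star}:=Q$ is an optimal solution of each of (i), (ii), (iii). Moreover, for each of these problems, among all of its optimal solutions $X$, $X^{\star}$ minimizes $S(X)$.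
   Context: A row-partial permutation matrix $P^{(i)}\in\{0,1\}^{K^{(i)}\times M}$ is a matrix consisting of a subset of rows of an $M\times M$ permutation matrix, i.e., each row contains exactly one $1$ and each column contains at most one $1$. $\mathbf{1}_n$ is the all-ones vector in $\mathbb{R}^n$ and $\mathbf{I}_n$ the $n\times n$ identity. For a positive semidefinite matrix $X$, the von Neumann entropy functional is $S(X):=\mathrm{Tr}[X\log X]-\mathrm{Tr}[X]$ (with the convention $0\log 0=0$ on the eigenvalues). *)

(* Defs.v *)
From HB Require Import structures.
From mathcomp Require Import all_boot all_order all_algebra.
From mathcomp Require Import all_classical all_reals all_analysis.
Set Implicit Arguments. Unset Strict Implicit. Unset Printing Implicit Defensive.
Import Order.TTheory GRing.Theory Num.Theory.
Local Open Scope ring_scope.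

(* Row-partial permutation matrix: rows of an M x M permutation matrix,
   i.e. A = \matrix_(r,c) [f r == c] with f injective (each row exactly one 1,
   each column at most one 1). *)
Definition row_partial_perm (R : realType) (k m : nat) (A : 'M[R]_(k, m)) :=
  exists f : 'I_k -> 'I_m, injective f /\
    A = \matrix_(r, c) (f r == c)%:R.

Definition psd (R : realType) (n : nat) (X : 'M[R]_n) :=
  X^T = X /\ forall v : 'cV[R]_n, 0 <= (v^T *m X *m v) 0 0.

Definition eigdecomp (R : realType) (n : nat) (X : 'M[R]_n)
    (d : 'rV[R]_n) :=
  exists U : 'M[R]_n, U *m U^T = 1%:M /\ X = U^T *m diag_mx d *m U.

(* a (chosen) vector of eigenvalues of X, when an orthogonal
   eigendecomposition exists *)
Definition eigvals (R : realType) (n : nat) (X : 'M[R]_n) : 'rV[R]_n :=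
  xget 0 [set d | eigdecomp X d].

Definition xlogx (R : realType) (x : R) : R :=
  if x == 0 then 0 else x * ln x.

(* von Neumann entropy functional S(X) = Tr[X log X] - Tr[X], computed on
   the eigenvalues (with 0 log 0 = 0). *)
Definition vN_S (R : realType) (n : nat) (X : 'M[R]_n) : R :=
  \sum_(l < n) (xlogx (eigvals X 0 l) - eigvals X 0 l).

Definition strong_feas (R : realType) (N : nat) (K : 'I_N -> nat)
    (X : 'M[R]_(\sum_i K i)) :=
  (forall i, submxblock X i i = 1%:M) /\ psd X.

Definition weak_feas (R : realType) (N : nat) (K : 'I_N -> nat)
    (X : 'M[R]_(\sum_i K i)) :=
  (forall l, X l l = 1) /\
  (forall i, \tr (submxblock X i i *m const_mx (1 / (K i)%:R)) = 1) /\
  psd X.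

Definition gw_feas (R : realType) (N : nat) (K : 'I_N -> nat)
    (X : 'M[R]_(\sum_i K i)) :=
  (forall l, X l l = 1) /\ psd X.

Definition optimal_min_entropy (R : realType) (n : nat)
    (feas : 'M[R]_n -> Prop) (Q Xs : 'M[R]_n) :=
  [/\ feas Xs,
      (forall X, feas X -> \tr (Q *m X) <= \tr (Q *m Xs)) &
      (forall X, feas X -> \tr (Q *m X) = \tr (Q *m Xs) -> vN_S Xs <= vN_S X)].

(* Main.v *)
Require Import Defs.
From HB Require Import structures.
From mathcomp Require Import all_boot all_order all_algebra.
From mathcomp Require Import all_classical all_reals all_analysis.
From mathcomp Require Import ring lra.
From mathcomp Require complex.
Import Order.TTheory GRing.Theory Num.Theory.
Local Open Scope ring_scope.

Module EigM.
Set Implicit Arguments. Unset Strict Implicit. Unset Printing Implicit Defensive.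
Import complex.
Local Open Scope ring_scope.
Lemma normsq_ge0 (R : realDomainType) n (x : 'rV[R]_n) : 0 <= (x *m x^T) 0 0.
Proof. rewrite !mxE; apply: sumr_ge0 => k _; rewrite mxE -expr2; exact: sqr_ge0. Qed.

Lemma normsq_eq0 (R : realDomainType) n (x : 'rV[R]_n) : (x *m x^T) 0 0 = 0 -> x = 0.
Proof.
rewrite !mxE => /eqP; rewrite psumr_eq0 => [/allP H|k _]; last by rewrite mxE -expr2 sqr_ge0.
apply/rowP => k; rewrite mxE; have := H k (mem_index_enum k).
by rewrite mxE -expr2 sqrf_eq0 => /eqP.
Qed.

Lemma scalemxE' (R : pzRingType) m n (k : R) (M : 'M[R]_(m, n)) i j : (k *: M) i j = k * M i j.
Proof. by rewrite mxE. Qed.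

Section Eig.
Variable R : rcfType.
Local Notation C := (complex.complex R).

Definition cR (x : R) : C := complex.Complex x 0.

Lemma Re_sum I (r : seq I) (P : pred I) (F : I -> C) :
  complex.Re (\sum_(i <- r | P i) F i) = \sum_(i <- r | P i) complex.Re (F i).
Proof.
apply: (big_morph (@complex.Re R)) => //.
by case=> ? ? [] ? ?.
Qed.

Lemma Im_sum I (r : seq I) (P : pred I) (F : I -> C) :
  complex.Im (\sum_(i <- r | P i) F i) = \sum_(i <- r | P i) complex.Im (F i).
Proof.
apply: (big_morph (@complex.Im R)) => //.
by case=> ? ? [] ? ?.
Qed.

Lemma real_eigen n (A : 'M[R]_n.+1) : A^T = A ->
  exists (l : R) (u : 'rV[R]_n.+1), u != 0 /\ u *m A = l *: u.
Proof.
move=> As.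
pose Ac := map_mx cR A.
have [a /eigenvalueP [v vA vn0]] := eigenvalue_closed Ac (ltn0Sn n).
pose x := map_mx (@complex.Re R) v; pose y := map_mx (@complex.Im R) v.
pose al := complex.Re a; pose be := complex.Im a.
have hx : x *m A = al *: x - be *: y.
  apply/rowP => j; have /rowP /(_ j) := vA.
  rewrite !mxE => /(congr1 (@complex.Re R)); rewrite Re_sum => H.
  rewrite /al /be. rewrite (_ : \sum_k _ = complex.Re (a * v 0 j)); last first.
    rewrite -H; apply: eq_bigr => k _; rewrite !mxE /cR.
    by case: (v 0 k) => ? ? /=; rewrite mulr0 subr0.
  rewrite ?mxE; rewrite /al /be; case: a {H vA al be} => a1 a2 /=; case: (v 0 j) => ? ? /=.
  done.
have hy : y *m A = be *: x + al *: y.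
  apply/rowP => j; have /rowP /(_ j) := vA.
  rewrite !mxE => /(congr1 (@complex.Im R)); rewrite Im_sum => H.
  rewrite (_ : \sum_k _ = complex.Im (a * v 0 j)); last first.
    rewrite -H; apply: eq_bigr => k _; rewrite !mxE /cR.
    by case: (v 0 k) => ? ? /=; rewrite mulr0 add0r.
  rewrite ?mxE; rewrite /al /be; case: a {H vA al be hx} => a1 a2 /=; case: (v 0 j) => ? ? /=.
  by rewrite addrC.
have E1 : x *m A *m y^T = al *: (x *m y^T) - be *: (y *m y^T).
  by rewrite hx mulmxBl -!scalemxAl.
have E2 : x *m A *m y^T = be *: (x *m x^T) + al *: (x *m y^T).
  rewrite -mulmxA -{1}As -trmx_mul hy linearD /= !linearZ /= mulmxDr -!scalemxAr.
  done.
have hb : be * ((x *m x^T) 0 0 + (y *m y^T) 0 0) = 0.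
  move: (etrans (esym E1) E2).
  set p := (x *m y^T); set q := (x *m x^T); set r := (y *m y^T).
  move=> /rowP/(_ 0); rewrite !mxE => E.
  lra.
have be0 : be = 0.
  move: hb => /eqP; rewrite mulf_eq0 => /orP[/eqP //|/eqP H0].
  have hx0 := normsq_ge0 x; have hy0 := normsq_ge0 y.
  have /normsq_eq0 X0 : (x *m x^T) 0 0 = 0 by lra.
  have /normsq_eq0 Y0 : (y *m y^T) 0 0 = 0 by lra.
  case/eqP: vn0; apply/rowP => k; rewrite mxE.
  have /rowP/(_ k) := X0; have /rowP/(_ k) := Y0; rewrite !mxE.
  by case: (v 0 k) => ? ? /= -> ->.
have [x0|xn0] := eqVneq x 0.
  exists al, y; split; last by rewrite hy be0 scale0r add0r.
  apply: contraNneq vn0 => Y0; apply/eqP; apply/rowP => k; rewrite mxE.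
  have /rowP/(_ k) := x0; have /rowP/(_ k) := Y0; rewrite !mxE.
  by case: (v 0 k) => ? ? /= -> ->.
by exists al, x; split => //; rewrite hx be0 scale0r subr0.
Qed.

Definition e0 n : 'rV[R]_n.+1 := row 0 1%:M.

Lemma e0_dot n (v : 'rV[R]_n.+1) : (v *m (e0 n)^T) 0 0 = v 0 0.
Proof.
rewrite !mxE (bigD1 ord0) //= big1 ?addr0; first by rewrite !mxE eqxx mulr1.
by move=> k /negPf kn0; rewrite !mxE eq_sym kn0 mulr0.
Qed.

Lemma dot_e0 n (v : 'rV[R]_n.+1) : ((e0 n) *m v^T) 0 0 = v 0 0.
Proof. by rewrite -{1}[e0 n]trmxK -trmx_mul mxE e0_dot. Qed.

Lemma householder n (u : 'rV[R]_n.+1) : (u *m u^T) 0 0 = 1 ->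
  exists H : 'M[R]_n.+1, H^T = H /\ H *m H = 1%:M /\ row 0 H = u.
Proof.
move=> u1.
have [ue|une] := eqVneq u (e0 n).
  by exists 1%:M; rewrite trmx1 mulmx1 ue.
pose w := u - e0 n; pose c := (w *m w^T) 0 0.
have wn0 : w != 0 by rewrite subr_eq0.
have cn0 : c != 0 by apply: contraNneq wn0 => H; apply/eqP; apply: normsq_eq0.
have hc : c = 2 - 2 * u 0 0.
  have h2 := e0_dot u; have h3 := dot_e0 u; have h4 : (e0 n *m (e0 n)^T) 0 0 = 1.
    by rewrite e0_dot /e0 !mxE eqxx.
  move: u1 h2 h3 h4.
  rewrite /c /w linearB /= mulmxBl !mulmxBr.
  set p1 := (u *m u^T); set p2 := (u *m (e0 n)^T); set p3 := (e0 n *m u^T); set p4 := e0 n *m (e0 n)^T.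
  rewrite !mxE; lra.
have ww : w^T *m w *m (w^T *m w) = c *: (w^T *m w).
  by rewrite -mulmxA (mulmxA w) [w *m w^T]mx11_scalar -/c mul_scalar_mx -scalemxAr.
exists (1%:M - (2 / c) *: (w^T *m w)); split; [|split].
- by rewrite linearB /= linearZ /= trmx1 trmx_mul trmxK.
- move: ww; move: (w^T *m w) => W ww.
  rewrite mulmxBl !mulmxBr mul1mx mulmx1 -!scalemxAl -!scalemxAr ww !scalerA.
  rewrite mul1mx.
  have -> : (2 / c * (2 / c) * c) = 2 / c + 2 / c by field.
  by rewrite scalerDl opprD !addrA opprK -(addrA 1%:M) -opprD subrK.
- have de : delta_mx 0 0 = e0 n by rewrite /e0 rowE mulmx1.
  have w00 : w 0 0 = u 0 0 - 1 by rewrite /w /e0 !mxE eqxx.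
  rewrite rowE de mulmxBr mulmx1 -scalemxAr mulmxA [e0 n *m w^T]mx11_scalar dot_e0.
  rewrite mul_scalar_mx scalerA w00.
  have -> : 2 / c * (u 0 0 - 1) = -1.
    rewrite hc; have : 2 - 2 * u 0 0 != 0 by rewrite -hc.
    move=> h; field; move: h; apply: contra => /eqP h; apply/eqP; lra.
  by rewrite scaleN1r opprK /w addrC subrK.
Qed.


Lemma spectral n (A : 'M[R]_n) : A^T = A ->
  exists (U : 'M[R]_n) (d : 'rV[R]_n), U *m U^T = 1%:M /\ A = U^T *m diag_mx d *m U.
Proof.
elim: n A => [|n IH] A As.
  by exists 1%:M, 0; split; apply/matrixP => [[]].
have [l [u0 [u0n0 hu0]]] := real_eigen As.
pose c := (u0 *m u0^T) 0 0.
have cpos : 0 < c.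
  rewrite lt_def normsq_ge0 andbT; apply: contraNneq u0n0 => H.
  by apply/eqP; apply: normsq_eq0.
pose u := (Num.sqrt c)^-1 *: u0.
have u1 : (u *m u^T) 0 0 = 1.
  rewrite /u linearZ /= -scalemxAl -scalemxAr scalerA.
  rewrite scalemxE' -/c -expr2 exprVn sqr_sqrtr ?ltW // mulVf //; exact: lt0r_neq0.
have hu : u *m A = l *: u by rewrite /u -scalemxAl hu0 !scalerA mulrC.
have [H [Hs [HH Hr]]] := householder u1.
pose B := H *m A *m H.
have Bdef : B = H *m A *m H by [].
clearbody B.
have Bs : B^T = B by rewrite Bdef !trmx_mul Hs As mulmxA.
have rB : row 0 B = l *: e0 n.
  by rewrite Bdef !row_mul Hr hu -scalemxAl -Hr -row_mul HH.
have hB0 : forall j, B 0 j = l * (0 == j)%:R.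
  move=> j; have /rowP/(_ j) := rB; rewrite !mxE => <-; by [].
have hBj0 : forall j, B j 0 = l * (0 == j)%:R.
  by move=> j; rewrite -Bs mxE hB0.
have Bblk : (B : 'M[R]_(1 + n)) = block_mx (l%:M : 'M[R]_1) 0 0 (drsubmx (B : 'M[R]_(1 + n))).
  rewrite -[LHS](@submxK _ 1 n 1 n B); congr block_mx.
  - apply/matrixP => i j; rewrite !ord1 !mxE.
    have -> : lshift n (0 : 'I_1) = 0 by apply/val_inj.
    by rewrite hB0 eqxx mulr1.
  - apply/matrixP => i j; rewrite !ord1 !mxE.
    have -> : lshift n (0 : 'I_1) = 0 by apply/val_inj.
    by rewrite hB0 mulr0n mulr0.
  - apply/matrixP => i j; rewrite !ord1 !mxE.
    have -> : lshift n (0 : 'I_1) = 0 by apply/val_inj.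
    by rewrite hBj0 mulr0n mulr0.
have Bds : (drsubmx (B : 'M[R]_(1 + n)))^T = drsubmx (B : 'M[R]_(1 + n)).
  by rewrite trmx_drsub Bs.
have [V [d' [VV hV]]] := IH _ Bds.
pose G : 'M[R]_(1 + n) := block_mx 1%:M 0 0 V.
have GG : G *m G^T = 1%:M.
  rewrite /G tr_block_mx mulmx_block !trmx0 trmx1 !mulmx0 !mul0mx !addr0 !add0r mulmx1 VV.
  by rewrite -scalar_mx_block.
exists (G *m H), (row_mx (l%:M : 'rV_1) d'); split.
  by rewrite trmx_mul Hs mulmxA -(mulmxA G) HH mulmx1 GG.
have dl : diag_mx (l%:M : 'rV_1) = l%:M.
  by apply/matrixP => i j; rewrite !ord1 !mxE.
have GDG : G^T *m diag_mx (row_mx (l%:M : 'rV_1) d') *m G = B.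
  rewrite Bblk /G tr_block_mx diag_mx_row dl !trmx0 !trmx1 !mulmx_block. rewrite ?mulmx0 ?mul0mx ?addr0 ?add0r ?mulmx1 ?mul1mx. rewrite -hV; congr block_mx.
  by apply/matrixP => i j; rewrite !mxE; apply: big1 => k _; rewrite !mxE mul0r.
rewrite trmx_mul Hs.
have -> : H *m G^T *m diag_mx (row_mx (l%:M : 'rV_1) d') *m (G *m H) =
  H *m (G^T *m diag_mx (row_mx (l%:M : 'rV_1) d') *m G) *m H by rewrite !mulmxA.
rewrite GDG.
by rewrite Bdef !mulmxA HH mul1mx -mulmxA HH mulmx1.
Qed.
End Eig.

End EigM.
Import EigM.

Module Helpers.
Set Implicit Arguments. Unset Strict Implicit. Unset Printing Implicit Defensive.
Local Open Scope ring_scope.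
Section Jensen.
Variable R : realType.
Definition phi (x : R) := xlogx x - x.

Lemma phi0 : phi 0 = 0.
Proof. by rewrite /phi /xlogx eqxx subr0. Qed.

Lemma ln_le_sub1 (t : R) : 0 < t -> ln t <= t - 1.
Proof.
move=> t0; have := expR_ge1Dx (ln t); rewrite lnK ?posrE //; lra.
Qed.

Lemma tangent (x y : R) : 0 < x -> 0 <= y -> phi x + ln x * (y - x) <= phi y.
Proof.
move=> x0; rewrite le_eqVlt => /orP[/eqP <-|y0].
  rewrite phi0 /phi /xlogx gt_eqF //; lra.
rewrite /phi /xlogx !gt_eqF //.
have h := ln_le_sub1 (divr_gt0 x0 y0).
rewrite ln_div ?posrE // in h.
have : y * (ln x - ln y) <= y * (x / y - 1) by rewrite ler_pM2l.
have e : y * (x / y) = x by rewrite mulrCA divff ?gt_eqF // mulr1.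
rewrite !mulrBr e mulr1; lra.
Qed.

Lemma jensen (I : finType) (w y : I -> R) :
  (forall i, 0 <= w i) -> (forall i, 0 <= y i) -> \sum_i w i <= 1 ->
  phi (\sum_i w i * y i) <= \sum_i w i * phi (y i).
Proof.
move=> w0 y0 s1.
have x0 : 0 <= \sum_i w i * y i by apply: sumr_ge0 => i _; rewrite mulr_ge0.
move: x0; rewrite le_eqVlt => /orP[/eqP x0|xp].
  rewrite -x0 phi0; apply: sumr_ge0 => i _.
  have /psumr_eq0P/(_ i isT) : \sum_i w i * y i = 0 by [].
  move=> /(_ (fun j _ => mulr_ge0 (w0 j) (y0 j))) /eqP; rewrite mulf_eq0 => /orP[/eqP->|/eqP->].
    by rewrite mul0r.
  by rewrite phi0 mulr0.
set x := \sum_i w i * y i in xp *.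
apply: (@le_trans _ _ (\sum_i w i * (phi x + ln x * (y i - x)))); last first.
  by apply: ler_sum => i _; apply: ler_wpM2l => //; apply: tangent.
have -> : \sum_i w i * (phi x + ln x * (y i - x)) =
    (\sum_i w i) * (phi x - ln x * x) + ln x * x.
  rewrite (eq_bigr (fun i => w i * (phi x - ln x * x) + ln x * (w i * y i))); last by move=> i _; ring.
  by rewrite big_split /= -mulr_suml -mulr_sumr.
rewrite /phi /xlogx gt_eqF //.
have : (\sum_i w i) * x <= x by rewrite -[leRHS]mul1r ler_wpM2r // ltW.
lra.
Qed.
End Jensen.

Lemma cauchy_w (R : realType) (I : finType) (i u : I -> R) : (forall a, 0 <= i a) ->
  (\sum_a i a * u a) ^+ 2 <= (\sum_a i a) * (\sum_a i a * u a ^+ 2).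
Proof.
move=> i0.
set Si := \sum_a i a; set Su := \sum_a i a * u a; set Su2 := \sum_a i a * u a ^+ 2.
have : 0 <= \sum_a \sum_b i a * i b * (u a - u b) ^+ 2.
  by apply: sumr_ge0 => a _; apply: sumr_ge0 => b _; rewrite mulr_ge0 ?sqr_ge0 // mulr_ge0.
have -> : \sum_a \sum_b i a * i b * (u a - u b) ^+ 2 =
    \sum_a (i a * u a ^+ 2 * Si + i a * Su2 - 2 * (i a * u a) * Su).
  apply: eq_bigr => a _.
  rewrite (eq_bigr (fun b => i a * u a ^+ 2 * i b + i a * (i b * u b ^+ 2) - 2 * (i a * u a) * (i b * u b))); last by move=> b _; ring.
  by rewrite !big_split /= sumrN -!mulr_sumr.
rewrite !big_split /= sumrN -!mulr_suml -!mulr_sumr -/Si -/Su -/Su2 => H.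
have : 0 <= Su2 * Si + Si * Su2 - 2 * Su * Su by [].
move=> H2; rewrite expr2; lra.
Qed.

Lemma vN_S_eq (R : realType) n (X : 'M[R]_n) : X^T = X ->
  exists U, U *m U^T = 1%:M /\ X = U^T *m diag_mx (eigvals X) *m U /\
    vN_S X = \sum_k phi (eigvals X 0 k).
Proof.
move=> Xs.
have ex : exists d, eigdecomp X d.
  have [U [d [UU hU]]] := spectral Xs; exists d; exists U; split => //.
have [U [UU hU]] : eigdecomp X (eigvals X) by apply: xgetPex ex.
by exists U; split => //; split.
Qed.

Section Main.
Variables (R : realType) (L M : nat) (g : 'I_L -> 'I_M).

Definition Pm : 'M[R]_(L, M) := \matrix_(a, c) (g a == c)%:R.
Definition Qm := Pm *m Pm^T.
Definition cnt j : R := \sum_a (g a == j)%:R.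

Lemma sum_ind a : \sum_j ((g a == j)%:R : R) = 1.
Proof.
rewrite (bigD1 (g a)) //= eqxx big1 ?addr0 // => j /negPf; by rewrite eq_sym => ->.
Qed.

Lemma sum_cnt : \sum_j cnt j = L%:R.
Proof.
rewrite /cnt exchange_big /= (eq_bigr (fun _ => 1)) ?sumr_const ?card_ord //.
by move=> a _; rewrite sum_ind.
Qed.

Lemma cnt_ge0 j : 0 <= cnt j.
Proof. by apply: sumr_ge0 => a _; rewrite ler0n. Qed.

Lemma QmE a b : Qm a b = (g a == g b)%:R.
Proof.
rewrite !mxE (bigD1 (g a)) //= big1 ?addr0.
  by rewrite !mxE eqxx mul1r eq_sym.
by move=> j /negPf ja; rewrite !mxE eq_sym ja mul0r.
Qed.

Lemma Qm_sym : Qm^T = Qm.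
Proof. by rewrite /Qm trmx_mul trmxK. Qed.

Lemma Qm_psd : psd Qm.
Proof.
split; first exact: Qm_sym.
move=> v.
have -> : v^T *m Qm *m v = (Pm^T *m v)^T *m (Pm^T *m v)^T^T.
  by rewrite trmxK trmx_mul trmxK /Qm !mulmxA.
exact: normsq_ge0.
Qed.

Lemma mxE_add m n (A B : 'M[R]_(m, n)) i j : (A + B) i j = A i j + B i j.
Proof. by rewrite mxE. Qed.
Lemma mxE_opp m n (A : 'M[R]_(m, n)) i j : (- A) i j = - A i j.
Proof. by rewrite mxE. Qed.

Lemma quad_entry (X : 'M[R]_L) a b :
  ((delta_mx a 0 : 'cV[R]_L)^T *m X *m (delta_mx b 0 : 'cV[R]_L)) 0 0 = X a b.
Proof. by rewrite (@trmx_delta _ L 1 a 0) -(rowE a X) -(colE b (row a X)) !mxE. Qed.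

Lemma offdiag_le1 (X : 'M[R]_L) a b : (forall l, X l l = 1) -> psd X -> X a b <= 1.
Proof.
move=> d1 [Xs Xp].
have := Xp (delta_mx a 0 - delta_mx b 0).
have tB : (delta_mx a 0 - delta_mx b 0 : 'cV[R]_L)^T = (delta_mx a 0 : 'cV[R]_L)^T - (delta_mx b 0 : 'cV[R]_L)^T by rewrite raddfB.
rewrite tB !mulmxBl !mulmxBr !(mxE_add, mxE_opp) !quad_entry !d1.
have -> : X b a = X a b by rewrite -{1}Xs mxE.
lra.
Qed.

Lemma trQ (X : 'M[R]_L) : \tr (Qm *m X) = \sum_a \sum_b (g a == g b)%:R * X b a.
Proof.
rewrite /mxtrace; apply: eq_bigr => a _; rewrite mxE; apply: eq_bigr => b _.
by rewrite QmE.
Qed.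

Lemma Qm_diag l : Qm l l = 1.
Proof. by rewrite QmE eqxx. Qed.

Lemma opt_diff (X : 'M[R]_L) : \tr (Qm *m Qm) - \tr (Qm *m X) =
  \sum_a \sum_b (g a == g b)%:R * (1 - X b a).
Proof.
rewrite !trQ -sumrB; apply: eq_bigr => a _; rewrite -sumrB; apply: eq_bigr => b _.
rewrite QmE; case: eqP => [->|_]; rewrite ?eqxx /=; ring.
Qed.

Lemma opt_terms (X : 'M[R]_L) : (forall l, X l l = 1) -> psd X ->
  forall a b, 0 <= (g a == g b)%:R * (1 - X b a).
Proof.
move=> d1 Xp a b; rewrite mulr_ge0 ?ler0n // subr_ge0; exact: offdiag_le1.
Qed.

Lemma opt_bound (X : 'M[R]_L) : (forall l, X l l = 1) -> psd X ->
  \tr (Qm *m X) <= \tr (Qm *m Qm).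
Proof.
move=> d1 Xp; rewrite -subr_ge0 opt_diff.
by apply: sumr_ge0 => a _; apply: sumr_ge0 => b _; apply: opt_terms.
Qed.

Lemma opt_eq (X : 'M[R]_L) : (forall l, X l l = 1) -> psd X ->
  \tr (Qm *m X) = \tr (Qm *m Qm) -> forall a b, g a = g b -> X a b = 1.
Proof.
move=> d1 Xp E b a gab.
have D : \sum_a \sum_b (g a == g b)%:R * (1 - X b a) = 0 by rewrite -opt_diff E subrr.
have nn : forall a : 'I_L, true -> 0 <= \sum_b (g a == g b)%:R * (1 - X b a).
  by move=> a' _; apply: sumr_ge0 => b' _; exact: opt_terms.
have := @psumr_eq0P _ _ _ _ nn D a isT.
move=> /(@psumr_eq0P _ _ _ _ (fun b _ => opt_terms d1 Xp a b))/(_ b isT).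
rewrite gab eqxx mul1r => /eqP; rewrite subr_eq0 => /eqP <-; by [].
Qed.

Lemma trmx_mul_diag_entry m n (B : 'M[R]_(m, n)) j : (B^T *m B) j j = \sum_k B k j ^+ 2.
Proof. by rewrite mxE; apply: eq_bigr => k _; rewrite mxE expr2. Qed.

Lemma mul_trmx_diag_entry m n (B : 'M[R]_(m, n)) k : (B *m B^T) k k = \sum_a B k a ^+ 2.
Proof. by rewrite mxE; apply: eq_bigr => a _; rewrite mxE expr2. Qed.

Lemma quad_diag_entry m n (B : 'M[R]_(m, n)) (d : 'rV[R]_m) j :
  (B^T *m diag_mx d *m B) j j = \sum_k B k j ^+ 2 * d 0 k.
Proof.
rewrite mxE; apply: eq_bigr => k _; rewrite mxE (bigD1 k) //= big1 ?addr0.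
  by rewrite !mxE eqxx mulr1n expr2; ring.
by move=> i /negPf ik; rewrite !mxE ik mulr0n mulr0.
Qed.

Lemma row_quad (U X : 'M[R]_L) k :
  (row k U *m X *m (row k U)^T) 0 0 = (U *m X *m U^T) k k.
Proof.
rewrite !mxE; apply: eq_bigr => b _; rewrite !mxE; congr (_ * _).
by apply: eq_bigr => a _; rewrite !mxE.
Qed.

Lemma UPE (U : 'M[R]_L) k j : (U *m Pm) k j = \sum_a (g a == j)%:R * U k a.
Proof. by rewrite mxE; apply: eq_bigr => a _; rewrite mxE mulrC. Qed.

Section Weights.
Variables (U : 'M[R]_L) (UU : U *m U^T = 1%:M).

Definition yw j k := (U *m Pm) k j.
Definition ww j k := yw j k ^+ 2 / cnt j.

Lemma UtU : U^T *m U = 1%:M.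
Proof. exact: mulmx1C. Qed.

Lemma sum_y2 j : \sum_k yw j k ^+ 2 = cnt j.
Proof.
rewrite /yw -trmx_mul_diag_entry trmx_mul -mulmxA (mulmxA U^T) UtU mul1mx.
rewrite trmx_mul_diag_entry /cnt; apply: eq_bigr => a _; rewrite mxE.
by case: eqP; rewrite ?expr0n ?expr1n.
Qed.

Lemma ww_ge0 j k : 0 <= ww j k.
Proof. by rewrite divr_ge0 ?sqr_ge0 ?cnt_ge0. Qed.

Lemma sum_ww_k j : \sum_k ww j k = cnt j / cnt j.
Proof. by rewrite -mulr_suml sum_y2. Qed.

Lemma sum_ww_k_le1 j : \sum_k ww j k <= 1.
Proof.
rewrite sum_ww_k; have [->|cn0] := eqVneq (cnt j) 0; first by rewrite mul0r.
by rewrite divff.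
Qed.

Lemma y2_eq j k : yw j k ^+ 2 = ww j k * cnt j.
Proof.
have [c0|cn0] := eqVneq (cnt j) 0; last by rewrite /ww mulfVK.
rewrite c0 mulr0.
have := sum_y2 j; rewrite c0 => /psumr_eq0P -> //.
by move=> i _; rewrite sqr_ge0.
Qed.

Lemma ww_le j k : ww j k <= \sum_a (g a == j)%:R * U k a ^+ 2.
Proof.
have T0 : 0 <= \sum_a (g a == j)%:R * U k a ^+ 2.
  by apply: sumr_ge0 => a _; rewrite mulr_ge0 ?ler0n ?sqr_ge0.
have [c0|cn0] := eqVneq (cnt j) 0; first by rewrite /ww c0 invr0 mulr0.
have cp : 0 < cnt j by rewrite lt_def cn0 cnt_ge0.
rewrite /ww ler_pdivrMr // mulrC /yw UPE.
by apply: cauchy_w => a; rewrite ler0n.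
Qed.

Lemma sum_ww_j k : \sum_j ww j k <= 1.
Proof.
apply: (@le_trans _ _ (\sum_j \sum_a (g a == j)%:R * U k a ^+ 2)).
  by apply: ler_sum => j _; apply: ww_le.
rewrite exchange_big /=.
rewrite (eq_bigr (fun a => U k a ^+ 2)); last first.
  by move=> a _; rewrite -mulr_suml sum_ind mul1r.
by rewrite -mul_trmx_diag_entry UU mxE eqxx.
Qed.

Lemma ent_Q (e : 'rV[R]_L) : Qm = U^T *m diag_mx e *m U ->
  \sum_k phi (e 0 k) <= \sum_j phi (cnt j).
Proof.
move=> hQ.
have ek : forall k, e 0 k = \sum_j ww j k * cnt j.
  move=> k.
  have : (U *m Qm *m U^T) k k = e 0 k.
    by rewrite hQ !mulmxA UU mul1mx -mulmxA UU mulmx1 mxE eqxx mulr1n.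
  move=> <-; rewrite /Qm !mulmxA -(mulmxA (U *m Pm)) -trmx_mul mul_trmx_diag_entry.
  by apply: eq_bigr => j _; rewrite -y2_eq.
apply: (@le_trans _ _ (\sum_k \sum_j ww j k * phi (cnt j))).
  apply: ler_sum => k _; rewrite ek; apply: jensen.
  - by move=> j; apply: ww_ge0.
  - by move=> j; apply: cnt_ge0.
  - exact: sum_ww_j.
rewrite exchange_big /=; apply: ler_sum => j _.
rewrite -mulr_suml sum_ww_k.
have [->|cn0] := eqVneq (cnt j) 0; first by rewrite phi0 mulr0.
by rewrite divff // mul1r.
Qed.


Lemma PXP (X : 'M[R]_L) j : (forall a b, g a = g b -> X a b = 1) ->
  (Pm^T *m X *m Pm) j j = cnt j * cnt j.
Proof.
move=> hX; rewrite mxE /cnt mulr_suml; apply: eq_bigr => b _.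
rewrite [(Pm^T *m X) j b]mxE mulr_suml mulr_sumr; apply: eq_bigr => a _; rewrite !mxE.
have [gaj|] := eqVneq (g a) j; last by rewrite mul0r mulr0 mul0r.
have [gbj|] := eqVneq (g b) j; last by rewrite !mulr0 mul0r.
by rewrite hX ?gaj ?gbj // !mul1r.
Qed.

Lemma ent_lower (X : 'M[R]_L) (d : 'rV[R]_L) :
  (forall l, X l l = 1) -> psd X -> (forall a b, g a = g b -> X a b = 1) ->
  X = U^T *m diag_mx d *m U ->
  \sum_j phi (cnt j) <= \sum_k phi (d 0 k).
Proof.
move=> d1 [Xs Xp] hX hXd.
have UXU : U *m X *m U^T = diag_mx d.
  by rewrite hXd !mulmxA UU mul1mx -mulmxA UU mulmx1.
have d0 : forall k, 0 <= d 0 k.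
  move=> k; have := Xp (row k U)^T; rewrite trmxK row_quad UXU mxE eqxx mulr1n.
  by [].
have wd : forall j, \sum_k ww j k * d 0 k = cnt j.
  move=> j.
  rewrite /ww (eq_bigr (fun k => (cnt j)^-1 * ((U *m Pm) k j ^+ 2 * d 0 k))); last first.
    by move=> k _; rewrite /yw; ring.
  rewrite -mulr_sumr -quad_diag_entry -UXU.
  have -> : (U *m Pm)^T *m (U *m X *m U^T) *m (U *m Pm) = Pm^T *m X *m Pm.
    by rewrite trmx_mul !mulmxA -(mulmxA _ U^T U) UtU mulmx1 -(mulmxA _ U^T U) UtU mulmx1.
  rewrite PXP //.
  have [->|cn0] := eqVneq (cnt j) 0; first by rewrite !mulr0.
  by rewrite mulKf.
pose s k := \sum_j ww j k.
have trd : \sum_k d 0 k = L%:R.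
  have : \tr X = L%:R.
    by rewrite /mxtrace (eq_bigr (fun=> 1)) ?sumr_const ?card_ord // => a _; rewrite d1.
  rewrite hXd mxtrace_mulC mulmxA UU mul1mx mxtrace_diag => <-; by [].
have sd : \sum_k s k * d 0 k = L%:R.
  rewrite /s (eq_bigr (fun k => \sum_j ww j k * d 0 k)); last by move=> k _; rewrite mulr_suml.
  by rewrite exchange_big /= (eq_bigr cnt) ?sum_cnt // => j _; apply: wd.
have nn : forall k, true -> 0 <= (1 - s k) * d 0 k.
  by move=> k _; rewrite mulr_ge0 // subr_ge0 sum_ww_j.
have z : \sum_k (1 - s k) * d 0 k = 0.
  rewrite (eq_bigr (fun k => d 0 k - s k * d 0 k)); last by move=> k _; ring.
  by rewrite sumrB trd sd subrr.
have zk := fun k => @psumr_eq0P _ _ _ _ nn z k isT.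
apply: (@le_trans _ _ (\sum_j \sum_k ww j k * phi (d 0 k))).
  apply: ler_sum => j _; rewrite -{1}wd; apply: jensen => //.
  - by move=> k; apply: ww_ge0.
  - exact: sum_ww_k_le1.
rewrite exchange_big /=; apply: ler_sum => k _.
rewrite -mulr_suml -/(s k).
have := zk k; move/eqP; rewrite mulf_eq0 => /orP[|/eqP->]; last by rewrite phi0 mulr0.
by rewrite subr_eq0 => /eqP <-; rewrite mul1r.
Qed.
End Weights.

Lemma main_opt (feas : 'M[R]_L -> Prop) : feas Qm ->
  (forall X, feas X -> (forall l, X l l = 1) /\ psd X) ->
  optimal_min_entropy feas Qm Qm.
Proof.
move=> fQ fX; split => //.
- by move=> X /fX [d1 Xp]; apply: opt_bound.
- move=> X /fX [d1 Xp] E.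
  have hX := opt_eq d1 Xp E.
  have [U [UU [hU ->]]] := vN_S_eq Qm_sym.
  have [V [VV [hV ->]]] := vN_S_eq (proj1 Xp).
  exact: le_trans (ent_Q UU hU) (ent_lower VV d1 Xp hX hV).
Qed.
End Main.


End Helpers.
Import Helpers.

Theorem theorem1 (R : realType) (N : nat) (K : 'I_N -> nat) (M : nat)
  (P_ : forall i : 'I_N, 'M[R]_(K i, M)) :
  (1 <= N)%N -> (forall i, (0 < K i)%N) -> (1 <= M)%N ->
  (forall i, row_partial_perm (P_ i)) ->
  let P : 'M[R]_(\sum_i K i, M) := \mxcol_i P_ i in
  let Q := P *m P^T in
  [/\ optimal_min_entropy (@strong_feas R N K) Q Q,
      optimal_min_entropy (@weak_feas R N K) Q Q &
      optimal_min_entropy (@gw_feas R N K) Q Q].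
Proof.
move=> _ Kpos _ hP P Q.
pose F i := proj1_sig (cid (hP i)).
have hF : forall i, injective (F i) /\ P_ i = \matrix_(r, c) (F i r == c)%:R.
  by move=> i; rewrite /F; case: cid.
pose g (a : 'I_(\sum_i K i)) := F (tagnat.sig1 a) (tagnat.sig2 a).
have PE : P = Pm R g.
  apply/matrixP => a c; rewrite /P /Pm !mxE.
  by rewrite (proj2 (hF _)) mxE.
have QE : Q = Qm R g by rewrite /Q PE.
have gR : forall i r, g (tagnat.Rank i r) = F i r.
  move=> i r; rewrite /g /tagnat.sig1 /tagnat.sig2 /tagnat.Rank /= tagnat.rankK //.
have blkQ : forall i, submxblock Q i i = 1%:M.
  move=> i; apply/matrixP => r s; rewrite QE /submxblock /mxsub [LHS]mxE QmE !gR.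
  by rewrite (inj_eq (proj1 (hF i))) mxE.
have gwQ : gw_feas Q by split; [move=> l; rewrite QE Qm_diag | rewrite QE; apply: Qm_psd].
rewrite QE in blkQ gwQ *.
split.
- apply: main_opt; first by split => //; exact: gwQ.2.
  move=> X [bX Xp]; split => // l.
  have := congr1 (fun M : 'M[R]_(K (tagnat.sig1 l)) => M (tagnat.sig2 l) (tagnat.sig2 l)) (bX (tagnat.sig1 l)).
  by rewrite /= /submxblock /mxsub [LHS]mxE tagnat.sig2K => ->; rewrite mxE eqxx.
- apply: main_opt.
    split; first exact: gwQ.1; split; last exact: gwQ.2.
    move=> i; rewrite blkQ mul1mx /mxtrace (eq_bigr (fun=> 1 / (K i)%:R)); last by move=> r _; rewrite mxE.
    rewrite sumr_const card_ord -[_ *+ K i]mulr_natr div1r mulVf //.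
    by rewrite pnatr_eq0 -lt0n Kpos.
  by move=> X [d1 [_ Xp]].
- by apply: main_opt => // X [].
Qed.
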